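(* Let $r>1$ be real and let $p,q$ be $r$-mighty primes with $p>q^2$. Then $\sigma_{-r}(qp)<\sigma_{-r}(q^2)$.
   Context: $p_m$ denotes the $m$-th prime. For $n\in\mathbb{N}$, $\sigma_{-r}(n)=\sum_{d\mid n}d^{-r}$. Let $u_m(r)=\prod_{t=m+1}^\infty\frac1{1-p_t^{-r}}$. A prime $p_m$ is $r$-mighty if $1+p_m^{-r}>u_m(r)$. *)

(* Defs.v *)
From Stdlib Require Import Reals.
From Coquelicot Require Import Coquelicot.
From mathcomp Require Import ssreflect ssrbool ssrnat seq prime.

Open Scope R_scope.

Definition sigma_neg (r : R) (n : nat) : R :=
  foldr Rplus 0 (map (fun d : nat => Rpower (INR d) (- r)) (divisors n)).

Definition u_partial (r : R) (p N : nat) : R :=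
  foldr Rmult 1
    (map (fun q : nat => / (1 - Rpower (INR q) (- r)))
         (filter prime (iota p.+1 (N - p)))).

(* u_m(r) = prod_{t >= m+1} 1/(1 - p_t^{-r}) where p = p_m: the infinite
   product over all primes greater than p, as the limit of partial products. *)
Definition u_tail (r : R) (p : nat) : Rbar := Lim_seq (u_partial r p).

Definition mighty (r : R) (p : nat) : Prop :=
  prime p /\ Rbar_lt (u_tail r p) (Finite (1 + Rpower (INR p) (- r))).

(* Main.v *)
Require Import Defs.
From Stdlib Require Import Reals.
From Coquelicot Require Import Coquelicot.
From mathcomp Require Import ssreflect ssrbool ssrnat seq prime.
From Stdlib Require Import Lra.
From mathcomp Require Import ssrfun eqtype path div bigop binomial.
From mathcomp Require Import zify.
Section NT.
Local Open Scope nat_scope.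

Lemma fact_factor X N : 0 < X -> X <= N -> X = \prod_(0 <= p < N.+1) p ^ logn p X.
Proof.
move=> X0 XN; rewrite -{1}(partnT X0) (widen_partn _ XN).
by apply: eq_bigl => p.
Qed.

Lemma prod_sub (F : nat -> nat) a b N : (forall i, 0 < F i) -> b <= N ->
  \prod_(a <= i < b) F i <= \prod_(0 <= i < N) F i.
Proof.
move=> Fp bN.
have P : forall c d, 0 < \prod_(c <= i < d) F i.
  by move=> c d; elim/big_ind: _ => // x y; rewrite !lt0n; move=> /negPf Hx /negPf Hy; rewrite muln_eq0 Hx Hy.
case: (leqP a b) => ab; last by rewrite big_geq ?P // ltnW.
rewrite (big_cat_nat (leq0n a) (leq_trans ab bN)) (big_cat_nat ab bN) /=.
rewrite mulnA mulnC mulnA; apply: leq_pmull.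
by rewrite muln_gt0 !P.
Qed.

Definition lterm p n k := (2 * n) %/ p ^ k - 2 * (n %/ p ^ k).

Lemma lterm_le1 p n k : 0 < p -> lterm p n k <= 1.
Proof.
move=> p0; rewrite /lterm; set d := p ^ k.
have d0 : 0 < d by rewrite expn_gt0 p0.
have := divn_eq n d; have := ltn_pmod n d0.
have := divn_eq (2 * n) d; have := ltn_pmod (2 * n) d0.
set a := (2*n) %/ d; set b := (2*n) %% d; set c := n %/ d; set e := n %% d.
move=> hb ha he hc.
suff : a <= 2 * c + 1 by lia.
have : a * d < (2 * c + 2) * d by nia.
rewrite ltn_pmul2r //; lia.
Qed.

Lemma lterm_small p n k : 2 * n < p ^ k -> lterm p n k = 0.
Proof.
move=> h; rewrite /lterm !divn_small //; lia.
Qed.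

Lemma logn_C p n : prime p -> 0 < n ->
  logn p 'C(2 * n, n) = \sum_(1 <= k < (2 * n).+1) lterm p n k.
Proof.
move=> pp n0.
have p1 := prime_gt1 pp.
have hf := @bin_fact (2 * n) n ltac:(lia).
have E : 2 * n - n = n by lia.
rewrite E in hf.
have := congr1 (logn p) hf.
rewrite lognM ?bin_gt0 ?muln_gt0 ?fact_gt0 //; last by lia.
rewrite lognM ?fact_gt0 // !logn_fact //.
have ext : \sum_(1 <= k < n.+1) n %/ p ^ k = \sum_(1 <= k < (2 * n).+1) n %/ p ^ k.
  rewrite (big_cat_nat (_ : 1 <= n.+1) (_ : n.+1 <= (2 * n).+1)) //=; try lia.
  rewrite [X in _ = _ + X]big1_seq ?addn0 // => k /andP[_].
  rewrite mem_index_iota => /andP[hk _]; apply: divn_small.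
  apply: (leq_trans hk); apply: ltnW; exact: ltn_expl.
rewrite ext => H.
suff : \sum_(1 <= k < (2 * n).+1) lterm p n k + 2 * \sum_(1 <= k < (2 * n).+1) n %/ p ^ k
   = \sum_(1 <= k < (2 * n).+1) (2 * n) %/ p ^ k by lia.
rewrite big_distrr -big_split /=; apply: eq_bigr => k _; rewrite /lterm subnK //.
rewrite leq_divRL ?expn_gt0 ?(ltnW p1) //.
rewrite -mulnA; apply: leq_mul => //; exact: leq_divM.
Qed.

Lemma pow_logn_C p n : prime p -> 0 < n -> p ^ logn p 'C(2 * n, n) <= 2 * n.
Proof.
move=> pp n0; have p1 := prime_gt1 pp.
have n20 : 0 < 2 * n by lia.
have := trunc_log_bounds p1 n20; set T := trunc_log p (2 * n); move=> /andP[h1 h2].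
have TT : T < 2 * n by apply: leq_trans h1; exact: ltn_expl.
suff : logn p 'C(2 * n, n) <= T by move=> h; apply: leq_trans h1; apply: leq_pexp2l => //; lia.
rewrite logn_C // (big_cat_nat (_ : 1 <= T.+1) (_ : T.+1 <= (2 * n).+1)) //=; try lia.
rewrite [X in _ + X]big1_seq ?addn0; last first.
  move=> k /andP[_]; rewrite mem_index_iota => /andP[hk _]; apply: lterm_small.
  apply: leq_trans h2 _; apply: leq_pexp2l => //; lia.
apply: leq_trans (_ : \sum_(1 <= k < T.+1) 1 <= _).
  by apply: leq_sum => k _; apply: lterm_le1; lia.
by rewrite sum_nat_const_nat; lia.
Qed.


Lemma logn_C_mid p n : prime p -> 5 <= n -> 2 * n < 3 * p -> p <= n ->
  logn p 'C(2 * n, n) = 0.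
Proof.
move=> pp n5 h1 h2; have p1 := prime_gt1 pp.
rewrite logn_C //; last by lia.
rewrite big_nat_recl; last by lia.
rewrite big1_seq ?addn0.
  rewrite /lterm expn1.
  have -> : (2 * n) %/ p = 2.
    apply/eqP; rewrite eqn_leq -ltnS ltn_divLR ?leq_divRL; lia.
  have -> : n %/ p = 1.
    apply/eqP; rewrite eqn_leq -ltnS ltn_divLR ?leq_divRL; lia.
  by [].
move=> k /andP[_]; rewrite mem_index_iota => /andP[hk _]; apply: lterm_small.
have : p ^ 2 <= p ^ k.+1 by apply: leq_pexp2l; lia.
suff : 2 * n < p ^ 2 by lia.
rewrite expnS expn1; nia.
Qed.

Lemma binC_rec n : n.+1 * 'C((n.+1).*2, n.+1) = 2 * (2 * n).+1 * 'C(n.*2, n).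
Proof.
have h1 := @bin_fact (n.*2) n ltac:(lia).
have h2 := @bin_fact ((n.+1).*2) n.+1 ltac:(lia).
have e1 : n.*2 - n = n by lia.
have e2 : (n.+1).*2 - n.+1 = n.+1 by lia.
rewrite e1 in h1; rewrite e2 in h2.
have e3 : (n.+1).*2 = (n.*2).+2 by lia.
rewrite e3 !factS in h2. rewrite e3.
have f0 : 0 < n`! * n`! by rewrite muln_gt0 fact_gt0.
apply/eqP; rewrite -(eqn_pmul2r f0) -(eqn_pmul2l (_ : 0 < n.+1)) //; apply/eqP.
have : 'C(n.*2.+2, n.+1) * (n.+1 * n`! * (n.+1 * n`!)) = n.*2.+2 * (n.*2.+1 * (n.*2)`!) by rewrite -h2.
rewrite -h1; nia.
Qed.

Lemma binC_lower n : 4 ^ n <= (2 * n).+1 * 'C(2 * n, n).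
Proof.
elim: n => [|n IH]; first by rewrite bin0.
have := binC_rec n; rewrite -!mul2n => h.
rewrite expnS.
have : n.+1 * (4 * 4 ^ n) <= n.+1 * ((2 * n.+1).+1 * 'C(2 * n.+1, n.+1)); last by rewrite leq_pmul2l.
nia.
Qed.

Lemma binC_odd_rec k : k.+2 * 'C((k.+1).*2.+1, k.+1) = 2 * (k.*2.+3) * 'C(k.*2.+1, k).
Proof.
have h1 := @bin_fact (k.*2.+1) k ltac:(lia).
have h2 := @bin_fact ((k.+1).*2.+1) k.+1 ltac:(lia).
have e1 : k.*2.+1 - k = k.+1 by lia.
have e2 : (k.+1).*2.+1 - k.+1 = k.+2 by lia.
rewrite e1 in h1; rewrite e2 in h2.
have e3 : (k.+1).*2.+1 = (k.*2.+1).+2 by lia.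
rewrite e3 in h2 *; rewrite !factS in h2 h1 *.
have f0 : 0 < k`! * (k.+1 * k`!) by rewrite !muln_gt0 fact_gt0.
apply/eqP; rewrite -(eqn_pmul2r f0) -(eqn_pmul2l (_ : 0 < k.+1)) //; apply/eqP.
have : 'C(k.*2.+3, k.+1) * (k.+1 * k`! * (k.+2 * (k.+1 * k`!))) = k.*2.+3 * (k.*2.+2 * (k.*2.+1)`!) by rewrite -h2.
rewrite factS -h1; nia.
Qed.

Lemma binC_odd_upper k : 'C((2 * k).+1, k) <= 4 ^ k.
Proof.
elim: k => [|k IH]; first by rewrite bin0.
have := binC_odd_rec k; rewrite -!mul2n => h.
rewrite expnS.
have : k.+2 * 'C((2 * k.+1).+1, k.+1) <= k.+2 * (4 * 4 ^ k); last by rewrite leq_pmul2l.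
have e : (2 * k.+1).+1 = (2 * k).+3 by lia.
rewrite h; nia.
Qed.

Lemma logn_fact_small p k : prime p -> k < p -> logn p k`! = 0.
Proof.
move=> pp kp; rewrite logn_fact //; apply: big1_seq => j /andP[_].
rewrite mem_index_iota => /andP[hj _]; apply: divn_small.
apply: leq_trans kp _; rewrite -{1}(expn1 p); apply: leq_pexp2l => //; exact: prime_gt0.
Qed.

Lemma prim_mid k : \prod_(k.+2 <= p < (2 * k).+2 | prime p) p <= 'C((2 * k).+1, k).
Proof.
set C := 'C((2 * k).+1, k).
have C0 : 0 < C by rewrite bin_gt0; lia.
have hv : forall p, prime p -> k.+2 <= p < (2 * k).+2 -> 0 < logn p C.
  move=> p pp /andP[h1 h2].
  have hf := @bin_fact (2 * k).+1 k ltac:(lia).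
  have e : (2 * k).+1 - k = k.+1 by lia.
  rewrite e in hf.
  have := congr1 (logn p) hf.
  rewrite lognM ?muln_gt0 ?fact_gt0 // lognM ?fact_gt0 //.
  rewrite (@logn_fact_small p k pp) ?(@logn_fact_small p k.+1 pp); try lia.
  rewrite !addn0 /C => ->; rewrite logn_gt0 mem_primes pp fact_gt0 /=; apply: dvdn_fact; lia.
rewrite big_mkcond /=.
apply: leq_trans (_ : \prod_(k.+2 <= p < (2 * k).+2) p ^ logn p C <= _).
  rewrite big_seq [X in _ <= X]big_seq; apply: leq_prod => p; rewrite mem_index_iota => hp.
  case: ifP => pp.
    by rewrite -{1}(expn1 p); apply: leq_pexp2l; [exact: prime_gt0| exact: hv].
  by rewrite expn_gt0; lia.
rewrite {2}(@fact_factor C (maxn C (2 * k).+1) C0 (leq_maxl _ _)).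
apply: prod_sub; last by rewrite ltnS leq_maxr.
by move=> i; rewrite expn_gt0; case: i => [|i] //=; rewrite orbT.
Qed.

Definition prim m := \prod_(0 <= p < m.+1 | prime p) p.

Lemma prim_upper m : prim m <= 4 ^ m.
Proof.
elim/ltn_ind: m => m IH.
have [le2|gt2] := leqP m 2.
  by case: m le2 IH => [|[|[|]]] // _ _; rewrite /prim unlock.
case/boolP: (odd m) => od.
  have [k ek] : exists k, m = (2 * k).+1.
    exists m./2; rewrite -{1}(odd_double_half m) od; lia.
  rewrite /prim ek (@big_cat_nat _ _ _ k.+2) /=; try lia.
  have h1 : prim k.+1 <= 4 ^ k.+1 by apply: IH; lia.
  have h2 := prim_mid k.
  have h3 := binC_odd_upper k.
  rewrite /prim in h1.
  have -> : 4 ^ (2 * k).+1 = 4 ^ k.+1 * 4 ^ k by rewrite -expnD; congr (_ ^ _); lia.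
  apply: leq_mul => //; exact: leq_trans h2 h3.
have [n en] : exists n, m = n.+1 by exists m.-1; lia.
have np : ~~ prime m.
  apply/negP => pm; case: (even_prime pm) => h; [lia | by rewrite h in od].
have np' : prime n.+1 = false by rewrite -en; exact: negPf np.
rewrite /prim en big_mkcond big_nat_recr //= np' muln1 -big_mkcond.
apply: leq_trans (_ : 4 ^ n <= _).
  by have := IH n ltac:(lia); rewrite /prim.
by apply: leq_pexp2l; lia.
Qed.
End NT.

Section NTR.
Local Open Scope nat_scope.
Lemma INR_expn m n : INR (m ^ n) = (INR m ^ n)%R.
Proof.
elim: n => [|n IH]; first by rewrite expn0.
by rewrite expnS mult_INR IH.
Qed.

Lemma num_ineq_R (A : R) (e1 e2 : R) : (64 <= A)%R -> e1 = (6 * A + 24)%R -> e2 = ((A - 1) * (A - 1))%R ->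
  (e1 * ln A < e2 * ln 2)%R.
Proof.
move=> hA -> ->.
have L2 := ln_lt_2.
have hl : (ln (A / 64) <= A / 64 - 1)%R.
  have := exp_ineq1_le (ln (A / 64)); rewrite exp_ln; [lra|].
  apply: Rdiv_lt_0_compat; lra.
have e64 : ln 64 = (6 * ln 2)%R.
  have -> : 64%R = (2 ^ 6)%R by ring.
  by rewrite ln_pow; [simpl; ring| lra].
have hA' : ln A = (ln (A / 64) + ln 64)%R.
  rewrite -ln_mult; [|apply: Rdiv_lt_0_compat; lra|lra].
  by congr ln; field.
rewrite hA' e64.
set L := ln 2 in L2 *. set M := ln (A / 64) in hl *.
have hpos : (0 <= 6 * A + 24)%R by lra.
have : ((6 * A + 24) * M <= (6 * A + 24) * (A / 64 - 1))%R by apply: Rmult_le_compat_l.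
have hq : (0 < (A - 1) * (A - 1) - 36 * A - 144)%R by nra.
have h2 : (/2 * ((A - 1) * (A - 1) - 36 * A - 144) < L * ((A - 1) * (A - 1) - 36 * A - 144))%R.
  by apply: Rmult_lt_compat_r.
have h3 : ((6 * A + 24) * (A / 64 - 1) <= /2 * ((A - 1) * (A - 1) - 36 * A - 144))%R by nra.
nra.
Qed.

Lemma num_ineq a : 64 <= a -> a ^ (6 * a + 24) < 2 ^ ((a - 1) * (a - 1)).
Proof.
move=> ha.
have e64 : INR 64 = 64%R by rewrite INR_IZR_INZ.
have ha' : (64 <= INR a)%R by rewrite -e64; apply: le_INR; apply/ssrnat.leP.
apply/ssrnat.ltP; apply: INR_lt; rewrite !INR_expn.
have e2 : INR 2 = 2%R by simpl; ring.
rewrite e2.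
apply: ln_lt_inv; [apply: pow_lt; lra | apply: pow_lt; lra |].
rewrite !ln_pow; [| lra | lra].
apply: num_ineq_R => //.
  by rewrite plus_INR mult_INR; simpl; ring.
rewrite mult_INR minus_INR; [simpl; ring| apply/ssrnat.leP; lia].
Qed.

End NTR.
Arguments pow_logn_C {p n}.
Arguments logn_C_mid {p n}.
Section NT2.
Local Open Scope nat_scope.

Lemma logn_np p X : ~~ prime p -> logn p X = 0.
Proof. by move=> np; rewrite lognE (negPf np). Qed.

Lemma logn_C_big p n : 0 < n -> 2 * n < p -> logn p 'C(2 * n, n) = 0.
Proof.
move=> n0 hp; case/boolP: (prime p) => pp; last exact: logn_np.
have := pow_logn_C pp n0.
case: (logn p _) => // v h.
have : p <= p ^ v.+1 by rewrite -{1}(expn1 p); apply: leq_pexp2l; [exact: prime_gt0|].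
lia.
Qed.

Lemma C_factor n : 0 < n ->
  'C(2 * n, n) = \prod_(0 <= p < (2 * n).+1) p ^ logn p 'C(2 * n, n).
Proof.
move=> n0; set C := 'C(2 * n, n).
have C0 : 0 < C by rewrite bin_gt0; lia.
rewrite {1}(@fact_factor C (maxn C (2 * n)) C0 (leq_maxl _ _)).
rewrite (@big_cat_nat _ _ _ (2 * n).+1) //=; last by rewrite ltnS leq_maxr.
rewrite [X in _ * X = _]big1_seq ?muln1 // => p /andP[_].
rewrite mem_index_iota => /andP[hp _].
by rewrite /C logn_C_big.
Qed.

Lemma erdos n : 1985 <= n -> 4 <= count prime (iota n.+1 n).
Proof.
move=> n1985.
have n0 : 0 < n by lia.
set C := 'C(2 * n, n).
set s := Nat.sqrt (2 * n).
have [hs1 hs2] := Nat.sqrt_spec (2 * n) (Nat.le_0_l _).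
have hs1' : s * s <= 2 * n by apply/leP.
have hs2' : 2 * n < s.+1 * s.+1 by apply/ltP.
have s63 : 63 <= s by nia.
set a := s.+1.
set m := (2 * n) %/ 3.
have hm1 : m * 3 <= 2 * n by apply: leq_divM.
have hm2 : 2 * n < m * 3 + 3.
  by have := ltn_pmod (2 * n) (isT : 0 < 3); have := divn_eq (2 * n) 3; rewrite -/m; lia.
have am : a <= m.+1 by nia.
have HC := @C_factor n n0; rewrite -/C in HC.
rewrite (@big_cat_nat _ _ _ a) //= in HC; last by lia.
rewrite [\prod_(a <= i < _) _](@big_cat_nat _ _ _ m.+1) /= in HC; try lia.
rewrite [\prod_(m.+1 <= i < _) _](@big_cat_nat _ _ _ n.+1) /= in HC; try lia.
set P1 := \prod_(0 <= i < a) _ in HC.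
set P2 := \prod_(a <= i < m.+1) _ in HC.
set P3 := \prod_(m.+1 <= i < n.+1) _ in HC.
set P4 := \prod_(n.+1 <= i < (2 * n).+1) _ in HC.
have hP1 : P1 <= (2 * n) ^ a.
  rewrite -(subn0 a) -prod_nat_const_nat; apply: leq_prod => p _.
  case/boolP: (prime p) => pp; first exact: pow_logn_C.
  by rewrite logn_np //; lia.
have hP2 : P2 <= 4 ^ m.
  apply: leq_trans (prim_upper m).
  apply: leq_trans (_ : \prod_(a <= p < m.+1) (if prime p then p else 1) <= _).
    rewrite /P2 big_seq [X in _ <= X]big_seq; apply: leq_prod => p; rewrite mem_index_iota => /andP[hp _].
    case: ifP => pp; last by rewrite logn_np ?pp.
    have h1 := pow_logn_C pp n0; rewrite -/C in h1.
    have h2 : p ^ logn p C < p ^ 2 by rewrite expnS expn1; nia.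
    rewrite ltn_exp2l ?prime_gt1 // in h2.
    apply: (leq_trans (leq_pexp2l (prime_gt0 pp) (_ : logn p C <= 1))); [lia | by rewrite expn1].
  rewrite /prim [X in _ <= X]big_mkcond /=; apply: (@prod_sub (fun p => if prime p then p else 1)) => // i.
  by case: ifP => // /prime_gt0.
have hP3 : P3 = 1.
  rewrite /P3 big1_seq // => p /andP[_]; rewrite mem_index_iota => /andP[hp1 hp2].
  case/boolP: (prime p) => pp; last by rewrite logn_np.
  by rewrite logn_C_mid //; lia.
have hP4 : P4 <= (2 * n) ^ count prime (iota n.+1 n).
  apply: leq_trans (_ : \prod_(n.+1 <= p < (2 * n).+1) (if prime p then 2 * n else 1) <= _).
    apply: leq_prod => p _.
    case: ifP => pp; last by rewrite logn_np ?pp.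
    exact: pow_logn_C.
  rewrite -big_mkcond big_const_seq iter_muln_1 /index_iota.
  by have -> : (2 * n).+1 - n.+1 = n by lia.
have hlow := binC_lower n; rewrite -/C in hlow.
rewrite leqNgt; apply/negP => hc.
have hc3 : count prime (iota n.+1 n) <= 3 by lia.
have hP4' : P4 <= (2 * n) ^ 3.
  apply: leq_trans hP4 _; apply: leq_pexp2l => //; lia.
have hbig : 4 ^ n <= (2 * n).+1 * ((2 * n) ^ a * 4 ^ m * (2 * n) ^ 3).
  apply: leq_trans hlow _; rewrite leq_mul2l; apply/orP; right.
  rewrite HC hP3 mul1n mulnA; apply: leq_mul => //; exact: leq_mul.
have h2n : 2 * n <= a ^ 2 by rewrite expnS expn1; lia.
have hbig2 : 4 ^ n <= a ^ (2 * a + 8) * 4 ^ m.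
  apply: leq_trans hbig _.
  have -> : a ^ (2 * a + 8) = a ^ 2 * (a ^ 2) ^ a * (a ^ 2) ^ 3.
    by rewrite -!expnM -!expnD; congr (_ ^ _); lia.
  have e1 : (2 * n).+1 <= a ^ 2 by rewrite expnS expn1; lia.
  have e2 : (2 * n) ^ a <= (a ^ 2) ^ a by rewrite leq_exp2r //; lia.
  have e3 : (2 * n) ^ 3 <= (a ^ 2) ^ 3 by rewrite leq_exp2r //; lia.
  apply: leq_trans (_ : a ^ 2 * ((a ^ 2) ^ a * 4 ^ m * (a ^ 2) ^ 3) <= _).
    by apply: leq_mul => //; apply: leq_mul => //; apply: leq_mul.
  set X := a ^ 2; set Y := X ^ a; set Z := 4 ^ m; set W := X ^ 3; lia.
have hnm : 4 ^ (n - m) <= a ^ (2 * a + 8).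
  have : 4 ^ (n - m) * 4 ^ m <= a ^ (2 * a + 8) * 4 ^ m.
    by rewrite -expnD subnK //; lia.
  by rewrite leq_pmul2r // expn_gt0.
have hnum := @num_ineq a ltac:(lia).
rewrite (_ : a - 1 = s) in hnum; last by lia.
have : 2 ^ (s * s) <= a ^ (6 * a + 24).
  apply: leq_trans (_ : 2 ^ (6 * (n - m)) <= _).
    rewrite leq_exp2l //; clear -hs1' hm1; lia.
  have -> : 2 ^ (6 * (n - m)) = (4 ^ (n - m)) ^ 3.
    have e4 : 4 ^ (n - m) = 2 ^ (2 * (n - m)) by rewrite expnM.
    rewrite e4 -expnM; congr (_ ^ _); lia.
  have -> : a ^ (6 * a + 24) = (a ^ (2 * a + 8)) ^ 3.
    rewrite -expnM; congr (_ ^ _); lia.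
  by rewrite leq_exp2r.
move=> hh; have := leq_ltn_trans hh hnum; by rewrite ltnn.
Qed.

End NT2.

Section NT3.
Local Open Scope nat_scope.

Fixpoint chk (s : seq nat) : bool :=
  match s with
  | x0 :: ((x1 :: x2 :: x3 :: x4 :: _) as t) => (x4 <= 2 * x0) && chk t
  | _ => true
  end.

Lemma four_primes n x1 x2 x3 x4 : prime x1 -> prime x2 -> prime x3 -> prime x4 ->
  n < x1 -> x1 < x2 -> x2 < x3 -> x3 < x4 -> x4 <= 2 * n ->
  4 <= count prime (iota n.+1 n).
Proof.
move=> p1 p2 p3 p4 h1 h2 h3 h4 h5.
rewrite -size_filter.
have -> : 4 = size [:: x1; x2; x3; x4] by [].
apply: uniq_leq_size.
  rewrite /= !inE; lia.

move=> x; rewrite !inE mem_filter mem_iota => /or4P [] /eqP ->;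
  rewrite ?p1 ?p2 ?p3 ?p4 /=; apply/andP; split; lia.
Qed.

Lemma chain s : chk s -> sorted ltn s -> all prime s ->
  forall n, head 0 s <= n -> n < nth 0 s (size s - 4) -> 4 <= count prime (iota n.+1 n).
Proof.
elim: s => [|x0 t IH] //=.
case: t IH => [|x1 [|x2 [|x3 [|x4 r]]]] IH /=; try (move=> _ _ _ n; lia).
move=> /andP[h4 hc] /andP[l01 hs] /andP[p0 /and5P[p1 p2 p3 p4 pr]] n hn1 hn2.
case: (ltnP n x1) => hx.
  move: hs => /= /andP[l12 /andP[l23 /andP[l34 _]]].
  apply: (@four_primes n x1 x2 x3 x4) => //; lia.
apply: IH => //=.
  by rewrite p1 p2 p3 p4 pr.
move: hn2; have -> : (size r).+4 - 4 = (size r) by lia.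
by [].
Qed.

Definition PL := [:: 17; 19; 23; 29; 31; 37; 41; 43; 47; 53; 59; 61; 67; 71; 73; 79; 83; 89; 97; 101; 103; 107; 109; 113; 127; 131; 137; 139; 149; 151; 157; 163; 167; 173; 179; 181; 191; 193; 197; 199; 211; 223; 227; 229; 233; 239; 241; 251; 257; 263; 269; 271; 277; 281; 283; 293; 307; 311; 313; 317; 331; 337; 347; 349; 353; 359; 367; 373; 379; 383; 389; 397; 401; 409; 419; 421; 431; 433; 439; 443; 449; 457; 461; 463; 467; 479; 487; 491; 499; 503; 509; 521; 523; 541; 547; 557; 563; 569; 571; 577; 587; 593; 599; 601; 607; 613; 617; 619; 631; 641; 643; 647; 653; 659; 661; 673; 677; 683; 691; 701; 709; 719; 727; 733; 739; 743; 751; 757; 761; 769; 773; 787; 797; 809; 811; 821; 823; 827; 829; 839; 853; 857; 859; 863; 877; 881; 883; 887; 907; 911; 919; 929; 937; 941; 947; 953; 967; 971; 977; 983; 991; 997; 1009; 1013; 1019; 1021; 1031; 1033; 1039; 1049; 1051; 1061; 1063; 1069; 1087; 1091; 1093; 1097; 1103; 1109; 1117; 1123; 1129; 1151; 1153; 1163; 1171; 1181; 1187; 1193; 1201; 1213; 1217; 1223; 1229; 1231; 1237; 1249; 1259; 1277; 1279; 1283; 1289; 1291; 1297; 1301; 1303; 1307; 1319; 1321; 1327; 1361; 1367; 1373; 1381; 1399; 1409; 1423; 1427; 1429; 1433; 1439; 1447; 1451; 1453; 1459; 1471; 1481; 1483; 1487; 1489; 1493; 1499; 1511; 1523; 1531;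 1543; 1549; 1553; 1559; 1567; 1571; 1579; 1583; 1597; 1601; 1607; 1609; 1613; 1619; 1621; 1627; 1637; 1657; 1663; 1667; 1669; 1693; 1697; 1699; 1709; 1721; 1723; 1733; 1741; 1747; 1753; 1759; 1777; 1783; 1787; 1789; 1801; 1811; 1823; 1831; 1847; 1861; 1867; 1871; 1873; 1877; 1879; 1889; 1901; 1907; 1913; 1931; 1933; 1949; 1951; 1973; 1979; 1987; 1993; 1997; 1999; 2003; 2011; 2017; 2027].

Lemma dens n : 17 <= n -> 4 <= count prime (iota n.+1 n).
Proof.
move=> h.
case: (ltnP n 1985) => h2; last by apply: erdos.
have c1 : chk PL by vm_compute.
have c2 : sorted ltn PL by vm_compute.
have c3 : all prime PL by vm_compute.
have c4 : head 0 PL = 17 by vm_compute.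
have c5 : nth 0 PL (size PL - 4) = 2003 by vm_compute.
have := chain PL c1 c2 c3 n; rewrite c4 c5; apply; lia.
Qed.
End NT3.

Open Scope R_scope.

Lemma foldr_mult_cat (f : nat -> R) l1 l2 :
  foldr Rmult 1 (map f (l1 ++ l2)) = foldr Rmult 1 (map f l1) * foldr Rmult 1 (map f l2).
Proof. elim: l1 => [|x l IH] /=; [ring | rewrite IH; ring]. Qed.

Lemma foldr_mult_ge1 (f : nat -> R) l : (forall x, x \in l -> 1 <= f x) -> 1 <= foldr Rmult 1 (map f l).
Proof.
elim: l => [|x l IH] /=; first by move=> _; lra.
move=> h; have h1 := h x (mem_head _ _).
have h2 : 1 <= foldr Rmult 1 (map f l) by apply: IH => y hy; apply: h; rewrite inE hy orbT.
nra.
Qed.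

Lemma foldr_sum_ge (g h : nat -> R) (c : R) l : (forall x, x \in l -> c * h x <= g x) ->
  c * foldr Rplus 0 (map h l) <= foldr Rplus 0 (map g l).
Proof.
elim: l => [|x l IH] /=; first by move=> _; lra.
move=> H; have h1 := H x (mem_head _ _).
have h2 : c * foldr Rplus 0 (map h l) <= foldr Rplus 0 (map g l).
  by apply: IH => y hy; apply: H; rewrite inE hy orbT.
lra.
Qed.

Lemma foldr_sum_const (g : nat -> R) (c : R) l : (forall x, x \in l -> c <= g x) ->
  INR (size l) * c <= foldr Rplus 0 (map g l).
Proof.
elim: l => [|x l IH]; first by move=> _ /=; lra.
move=> H; have h1 := H x (mem_head _ _).
have h2 : INR (size l) * c <= foldr Rplus 0 (map g l).
  by apply: IH => y hy; apply: H; rewrite inE hy orbT.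
rewrite [size _]/= S_INR /= Rmult_plus_distr_r Rmult_1_l Rplus_comm; exact: Rplus_le_compat.
Qed.

Lemma foldr_sum_ge0 (g : nat -> R) l : (forall x, x \in l -> 0 <= g x) ->
  0 <= foldr Rplus 0 (map g l).
Proof.
elim: l => [|x l IH] /=; first by move=> _; lra.
move=> H; have h1 := H x (mem_head _ _).
have h2 : 0 <= foldr Rplus 0 (map g l).
  by apply: IH => y hy; apply: H; rewrite inE hy orbT.
exact: Rplus_le_le_0_compat.
Qed.

Lemma foldr_prod_sum (g : nat -> R) l : (forall x, x \in l -> 0 <= g x < 1) ->
  1 + foldr Rplus 0 (map g l) <= foldr Rmult 1 (map (fun x => / (1 - g x)) l).
Proof.
elim: l => [|x l IH]; first by move=> _ /=; lra.
move=> h; have [h1 h2] := h x (mem_head _ _).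
have hl : forall y, y \in l -> 0 <= g y < 1 by move=> y hy; apply: h; rewrite inE hy orbT.
have h3 := IH hl.
have h4 : 1 + g x <= / (1 - g x).
  apply: (Rmult_le_reg_r (1 - g x)); first lra.
  rewrite Rinv_l; [nra | lra].
have h5 : 0 <= foldr Rplus 0 (map g l).
  by apply: foldr_sum_ge0 => y hy; have := hl y hy; lra.
rewrite /=.
move: h3 h5; set S := foldr Rplus 0 (map g l); set P := foldr Rmult 1 _.
move=> h3 h5; nra.
Qed.

Lemma rp_bounds {r x} : 0 < r -> 1 < x -> 0 < Rpower x (- r) < 1.
Proof.
move=> r0 x1; split; first by rewrite /Rpower; apply: exp_pos.
rewrite -(Rpower_O x); last lra.
apply: Rpower_lt => //; lra.
Qed.

Lemma INR_gt1 {t} : (1 < t)%N -> 1 < INR t.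
Proof. move=> h; apply: (lt_INR 1 t); apply/ltP. done. Qed.

Lemma u_mono r p N0 N : 0 < r -> (p <= N0)%N -> (N0 <= N)%N -> u_partial r p N0 <= u_partial r p N.
Proof.
move=> r0 h1 h2; rewrite /u_partial.
have -> : (N - p = (N0 - p) + (N - N0))%N by lia.
rewrite iotaD filter_cat foldr_mult_cat.
set U0 := foldr _ _ _; set U1 := foldr _ _ _.
have hf : forall l, (forall x, x \in l -> prime x) -> 1 <= foldr Rmult 1 (map (fun q : nat => / (1 - Rpower (INR q) (- r))) l).
  move=> l hl; apply: foldr_mult_ge1 => x hx.
  have := rp_bounds r0 (INR_gt1 (prime_gt1 (hl x hx))) => hb.
  rewrite -Rinv_1; apply: Rinv_le_contravar; lra.
have hU0 : 1 <= U0 by apply: hf => x; rewrite mem_filter => /andP[].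
have hU1 : 1 <= U1 by apply: hf => x; rewrite mem_filter => /andP[].
nra.
Qed.

Lemma mighty_bound r p N : 0 < r -> mighty r p -> (p <= N)%N ->
  u_partial r p N < 1 + Rpower (INR p) (- r).
Proof.
move=> r0 [pp hm] hN.
have hle : Rbar_le (Finite (u_partial r p N)) (u_tail r p).
  rewrite -(Lim_seq_const (u_partial r p N)) /u_tail.
  apply: Lim_seq_le_loc; exists N => n hn; apply: u_mono => //; apply/leP; lia.
have := Rbar_le_lt_trans _ _ _ hle hm; done.
Qed.

Lemma rp_cmp r p t : 0 < r <= 2 -> 0 < p < t -> Rpower p (- r) * (p / t) ^ 2 <= Rpower t (- r).
Proof.
move=> [r0 r2] [p0 pt].
have t0 : 0 < t by lra.
have e : (p / t) ^ 2 = exp (2 * (ln p - ln t)).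
  rewrite -ln_div // (_ : 2 * ln (p / t) = ln (p / t) + ln (p / t)); last ring.
  rewrite exp_plus exp_ln; [ring | apply: Rdiv_lt_0_compat; lra].
rewrite e /Rpower -exp_plus.
have hl : ln p < ln t by apply: ln_increasing.
have h : - r * ln p + 2 * (ln p - ln t) <= - r * ln t by nra.
case: (Rle_lt_or_eq_dec _ _ h) => [hlt|heq].
  by left; apply: exp_increasing.
by rewrite heq; right.
Qed.

Lemma small_primes p : prime p -> (5 <= p)%N -> (p < 17)%N -> p \in [:: 5; 7; 11; 13]%N.
Proof.
move=> pp h1 h2.
have H : all (fun k => prime k ==> (k \in [:: 2; 3; 5; 7; 11; 13]%N)) (iota 0 17) by vm_compute.
move/allP: H => /(_ p); rewrite mem_iota /= => /(_ h2) /implyP /(_ pp).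
rewrite !inE; case/orP => [/eqP e|]; first by rewrite e in h1.
case/orP => [/eqP e|]; first by rewrite e in h1.
done.
Qed.

Lemma r_ge2 r p : 1 < r -> mighty r p -> (5 <= p)%N -> 2 <= r.
Proof.
move=> r1 hm p5.
case: (Rle_lt_dec 2 r) => // r2.
have pp := proj1 hm.
set y := Rpower (INR p) (- r).
have y0 : 0 < y by rewrite /y /Rpower; apply: exp_pos.
have p0 : 0 < INR p by apply: lt_0_INR; apply/ltP; lia.
have r0 : 0 < r by lra.
have r2' : 0 < r <= 2 by lra.
have key : forall N, (p <= N)%N ->
    1 <= foldr Rplus 0 (map (fun t => (INR p / INR t) ^ 2) (filter prime (iota p.+1 (N - p)))) -> False.
  move=> N hN hs.
  have hb := @mighty_bound r p N r0 hm hN.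
  set l := filter prime (iota p.+1 (N - p)).
  have hl : forall x, x \in l -> prime x /\ (p < x)%N.
    by move=> x; rewrite mem_filter mem_iota => /andP[-> /andP[h _]].
  have h1 := @foldr_prod_sum (fun t => Rpower (INR t) (- r)) l (fun x hx => let h := rp_bounds r0 (INR_gt1 (prime_gt1 (proj1 (hl x hx)))) in conj (Rlt_le _ _ (proj1 h)) (proj2 h)).
  have h2 := @foldr_sum_ge (fun t => Rpower (INR t) (- r)) (fun t => (INR p / INR t) ^ 2) y l
    (fun x hx => @rp_cmp r (INR p) (INR x) r2' (conj p0 (lt_INR _ _ (ltP (proj2 (hl x hx)))))).
  rewrite /u_partial -/l in hb.
  rewrite -/l in hs; rewrite -/y in hb.
  have h3 : y * 1 <= y * foldr Rplus 0 (map (fun t => (INR p / INR t) ^ 2) l) by apply: Rmult_le_compat_l; lra.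
  lra.
case: (ltnP p 17) => hp.
  have hN : (p <= 29)%N by lia.
  exfalso; apply: (key 29%N hN).
  move: (@small_primes p pp p5 hp); rewrite !inE => /or4P [] /eqP ->; vm_compute (filter _ _).
  all: rewrite /=; field_simplify; try lra.
have hN : (p <= 2 * p)%N by lia.
exfalso; apply: (key _ hN).
rewrite (_ : (2 * p - p = p)%N); last by lia.
have hd := @dens p hp.
rewrite -size_filter in hd.
apply: Rle_trans (@foldr_sum_const _ (/ 4) _ _).
  apply: (Rle_trans _ (4 * / 4)); first lra.
  apply: Rmult_le_compat_r; first lra.
  apply: (Rle_trans _ (INR 4)); first by simpl; lra.
  by apply: le_INR; apply/leP; exact: hd.
move=> x; rewrite mem_filter mem_iota => /andP[_ /andP[h1 h2]].
have hx : INR x <= 2 * INR p.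
  by rewrite (_ : 2 * INR p = INR (2 * p)); [apply: le_INR; apply/leP; lia | rewrite mult_INR; simpl; ring].
have hx0 : 0 < INR x by apply: lt_0_INR; apply/ltP; lia.
have : / 2 <= INR p / INR x.
  apply: (Rmult_le_reg_r (INR x)) => //; field_simplify; lra.
nra.
Qed.

Lemma div_prime_char q d : prime q -> d %| q = (d == 1%N) || (d == q).
Proof.
move=> pq; apply/idP/idP.
  by case/primeP: pq => _ H /H.
by case/orP => /eqP ->; rewrite ?dvd1n ?dvdnn.
Qed.

Lemma divisors_qp q p : prime q -> prime p -> (q < p)%N -> divisors (q * p) = [:: 1%N; q; p; (q * p)%N].
Proof.
move=> pq pp qp.
have q1 := prime_gt1 pq; have p1 := prime_gt1 pp.
apply: (irr_sorted_eq ltn_trans ltnn); first exact: sorted_divisors_ltn.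
  rewrite /= q1 qp /=; apply/andP; split => //; nia.
move=> d; rewrite -dvdn_divisors ?muln_gt0 ?prime_gt0 // !inE.
apply/idP/idP.
  case/boolP: (q %| d) => hq.
    case/dvdnP: hq => k -> .
    rewrite mulnC dvdn_pmul2l ?prime_gt0 // div_prime_char // => /orP[] /eqP ->; lia.
  have cq : coprime d q by rewrite coprime_sym prime_coprime.
  rewrite Gauss_dvdr // div_prime_char // => /orP[] /eqP ->; lia.
case/or4P => /eqP ->; [exact: dvd1n | exact: dvdn_mulr (dvdnn _) | exact: dvdn_mull (dvdnn _) | exact: dvdnn].
Qed.

Lemma divisors_qq q : prime q -> divisors (q * q) = [:: 1%N; q; (q * q)%N].
Proof.
move=> pq.
have q1 := prime_gt1 pq.
apply: (irr_sorted_eq ltn_trans ltnn); first exact: sorted_divisors_ltn.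
  rewrite /= q1 /=; apply/andP; split => //; nia.
move=> d; rewrite -dvdn_divisors ?muln_gt0 ?prime_gt0 // !inE.
apply/idP/idP.
  case/boolP: (q %| d) => hq.
    case/dvdnP: hq => k -> .
    rewrite mulnC dvdn_pmul2l ?prime_gt0 // div_prime_char // => /orP[] /eqP ->; lia.
  have cq : coprime d q by rewrite coprime_sym prime_coprime.
  rewrite Gauss_dvdr // div_prime_char // => /orP[] /eqP e.
    by rewrite e eqxx.
  by rewrite e dvdnn in hq.
case/or3P => /eqP ->; [exact: dvd1n | exact: dvdn_mulr (dvdnn _) | exact: dvdnn].
Qed.

Lemma Rpower_1_base y : Rpower 1 y = 1.
Proof. by rewrite /Rpower ln_1 Rmult_0_r exp_0. Qed.

Lemma key_ineq (a b r : R) : 2 <= r -> 2 <= a -> a * a + 1 <= b ->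
  Rpower a r * Rpower a r + Rpower a r < Rpower b r.
Proof.
move=> r2 a2 hb.
have a0 : 0 < a by lra.
set E := Rpower a (r - 2).
have E1 : 1 <= E.
  rewrite /E -(Rpower_O a) //; apply: Rle_Rpower; lra.
have i2 : INR 2 = 2 by simpl; ring.
have sq : forall x, 0 < x -> Rpower x 2 = x * x.
  by move=> x x0; rewrite -i2 Rpower_pow //; simpl; ring.
have hQ : Rpower a r = E * (a * a).
  rewrite /E -sq // -Rpower_plus; congr Rpower; ring.
have hP1 : Rpower (a * a + 1) r <= Rpower b r.
  apply: Rle_Rpower_l; nra.
have hP2 : Rpower (a * a + 1) r = Rpower (a * a + 1) (r - 2) * ((a * a + 1) * (a * a + 1)).
  rewrite -(sq (a * a + 1)); last nra.
  rewrite -Rpower_plus; congr Rpower; ring.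
have hP3 : E * E <= Rpower (a * a + 1) (r - 2).
  rewrite /E Rpower_mult_distr //; apply: Rle_Rpower_l; nra.
rewrite hQ.
have hpos : 0 <= (a * a + 1) * (a * a + 1) by nra.
have : E * E * ((a * a + 1) * (a * a + 1)) <= Rpower b r.
  apply: Rle_trans hP1; rewrite hP2; apply: Rmult_le_compat_r => //.
nra.
Qed.

Theorem mainTheorem8 (r : R) (p q : nat) :
  1 < r -> mighty r p -> mighty r q -> (q * q < p)%nat ->
  sigma_neg r (q * p) < sigma_neg r (q * q).
Proof.
move=> r1 hp hq hqp.
have pp := proj1 hp; have pq := proj1 hq.
have q2 := prime_gt1 pq.
have p5 : (5 <= p)%N by nia.
have r2 := @r_ge2 r p r1 hp p5.
have qp : (q < p)%N by nia.
rewrite /sigma_neg divisors_qp // divisors_qq //=.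
have q0 : 0 < INR q by apply: lt_0_INR; apply/ltP; lia.
have p0 : 0 < INR p by apply: lt_0_INR; apply/ltP; lia.
rewrite !mult_INR -!Rpower_mult_distr //.
have i1 : INR 1 = 1 by [].
rewrite Rpower_1_base !Rpower_Ropp.
have hq2 : 2 <= INR q.
  by rewrite (_ : 2 = INR 2); [apply: le_INR; apply/leP | simpl; ring].
have hpq : INR q * INR q + 1 <= INR p.
  rewrite -mult_INR -S_INR; apply: le_INR; apply/leP; exact: hqp.
have K := @key_ineq (INR q) (INR p) r r2 hq2 hpq.
set Q := Rpower (INR q) r in K *; set P := Rpower (INR p) r in K *.
have Q0 : 0 < Q by rewrite /Q /Rpower; apply: exp_pos.
have P0 : 0 < P by rewrite /P /Rpower; apply: exp_pos.
have : / P * (1 + / Q) < / Q * / Q.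
  apply: (Rmult_lt_reg_r (P * Q * Q)); first by apply: Rmult_lt_0_compat => //; nra.
  have e1 : / P * (1 + / Q) * (P * Q * Q) = Q * Q + Q by field; lra.
  have e2 : / Q * / Q * (P * Q * Q) = P by field; lra.
  by rewrite e1 e2.
nra.
Qed.
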